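(* In $(\lambda\beta\eta\pi* )'$, let $t$ be a term and $z^\top$ a variable of type $\top$ not occurring in $t$. Then (a) if $t$ is reducible, then $t[*^\top:=z^\top]$ is reducible; and (b) $t[*^\top:=z^\top]\stackrel{*}{\to} t$. In particular, if $t$ has atomic type and is SN, then $t[*^\top:=z^\top]$ is SN.
   Context: Types are built from a distinguished type constant $\top$ and type variables by means of $\varphi\times\psi$ and $\varphi\to\psi$; an atomic type is $\top$ or a type variable. Terms are simply typed (each variable carries its type): the term constant $*^\top$, variables $x^\varphi$, abstractions $(\lambda x^\varphi.t^\psi)^{\varphi\to\psi}$, applications $(u^{\varphi\to\psi}v^\varphi)^\psi$, pairs $\langle u^\varphi,v^\psi\rangle^{\varphi\times\psi}$, projections $(\pi_1 t^{\varphi\times\psi})^\varphi$, $(\pi_2 t^{\varphi\times\psi})^\psi$. Terms are identified up to renaming of bound variables, written $\equiv$; $\mathrm{FV}(t)$ is the set of free variables. The set $\mathit{Iso}(\top)$ is the least set of types containing $\top$, containing $\varphi\to\tau$ whenever $\tau\in\mathit{Iso}(\top)$ ($\varphi$ arbitrary), and containing $\tau_1\times\tau_2$ whenever $\tau_1,\tau_2\in\mathit{Iso}(\top)$. For $\tau\in\mathit{Iso}(\top)$ the canonical term $*^\tau$ is: $*^\top$ the constant; $*^{\varphi\to\tau}:=\lambda x^\varphi.*^\tau$; $*^{\tau_1\times\tau_2}:=\langle *^{\tau_1},*^{\tau_2}\rangle$ (writing $*^\varphi$ presupposes $\varphi\in\mathit{Iso}(\top)$). The one-step rewrite relation $\to$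 of $(\lambda\beta\eta\pi* )'$ is the closure under arbitrary term contexts of: $(\beta)$ $(\lambda x.u)v\to u[x:=v]$; $(\pi_1)$ $\pi_1\langle u,v\rangle\to u$; $(\pi_2)$ $\pi_2\langle u,v\rangle\to v$; $(\eta)$ $\lambda x.tx\to t$ if $x\notin\mathrm{FV}(t)$; $(SP)$ $\langle\pi_1u,\pi_2u\rangle\to u$; (gentop) $u^\tau\to *^\tau$ if $\tau\in\mathit{Iso}(\top)$ and $u\not\equiv *^\tau$; $(\eta_{top})$ $\lambda x^\tau.t\,*^\tau\to t$ if $\tau\in\mathit{Iso}(\top)$, $x\notin\mathrm{FV}(t)$; $(SP_{top}1)$ $\langle\pi_1u,*^\tau\rangle\to u$ for $u$ of type $\varphi\times\tau$, $\tau\in\mathit{Iso}(\top)$; $(SP_{top}2)$ $\langle *^\tau,\pi_2u\rangle\to u$ for $u$ of type $\tau\times\psi$, $\tau\in\mathit{Iso}(\top)$. $\stackrel{*}{\to}$ is the reflexive transitive closure. A term is SN if there is no infinite $\to$-sequence starting from it. For a term $t$ and a variable $z^\top$, $t[*^\top:=z^\top]$ denotes the term obtained by replacing every occurrence of the constant $*^\top$ in $t$ by $z^\top$. Reducibility is defined by induction on types: a term of atomic type is reducible iff it is SN; a term $t$ of type $\varphi\times\psi$ is reducible iff $\pi_1t$ and $\pi_2t$ are reducible; a term $t$ of type $\varphi\to\psi$ is reducible iff $tu$ is reducible for every reducible term $u$ of type $\varphi$. *)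

(* Defs.v *)
From Stdlib Require Import List Relations.
Import ListNotations.

Inductive ty : Type :=
| Top : ty
| TV : nat -> ty
| Arr : ty -> ty -> ty
| Prod : ty -> ty -> ty.

Definition atomic (A : ty) : Prop :=
  match A with Top | TV _ => True | _ => False end.

Inductive var : list ty -> ty -> Type :=
| ZZ {G : list ty} {A : ty} : var (A :: G) A
| SS {G : list ty} {A B : ty} : var G A -> var (B :: G) A.

(* Free variables x^A are named globally: [fvar n A] is the
   variable with name n and type A.  Bound variables are de Bruijn indices,
   so terms are identified up to renaming of bound variables.  A term of the
   paper is an element of [tm [] A]. *)
Inductive tm : list ty -> ty -> Type :=
| cst {G} : tm G Top
| fvar {G} (n : nat) (A : ty) : tm G A
| bvar {G A} : var G A -> tm G A
| lam {G A B} : tm (A :: G) B -> tm G (Arr A B)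
| app {G A B} : tm G (Arr A B) -> tm G A -> tm G B
| pair {G A B} : tm G A -> tm G B -> tm G (Prod A B)
| p1 {G A B} : tm G (Prod A B) -> tm G A
| p2 {G A B} : tm G (Prod A B) -> tm G B.

Definition up_ren {G D : list ty} {B : ty}
  (r : forall A, var G A -> var D A) : forall A, var (B :: G) A -> var (B :: D) A :=
  fun A x =>
    match x in var L A0
      return match L with
             | [] => unit
             | C :: G' => (forall A1, var G' A1 -> var D A1) -> var (C :: D) A0
             end
    with
    | ZZ => fun _ => ZZ
    | SS y => fun r' => SS (r' _ y)
    end r.

Fixpoint ren {G D : list ty} (r : forall A, var G A -> var D A) {A : ty}
  (t : tm G A) {struct t} : tm D A :=
  match t in tm G0 A0 return (forall A1, var G0 A1 -> var D A1) -> tm D A0 with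
  | cst => fun _ => cst
  | fvar n B => fun _ => fvar n B
  | bvar x => fun r => bvar (r _ x)
  | lam u => fun r => lam (ren (up_ren r) u)
  | app u v => fun r => app (ren r u) (ren r v)
  | pair u v => fun r => pair (ren r u) (ren r v)
  | p1 u => fun r => p1 (ren r u)
  | p2 u => fun r => p2 (ren r u)
  end r.

Definition wk {G : list ty} (B : ty) {A : ty} (t : tm G A) : tm (B :: G) A :=
  ren (fun A0 (x : var G A0) => @SS G A0 B x) t.

Definition up_sub {G D : list ty} {B : ty}
  (s : forall A, var G A -> tm D A) : forall A, var (B :: G) A -> tm (B :: D) A :=
  fun A x =>
    match x in var L A0
      return match L with
             | [] => unit
             | C :: G' => (forall A1, var G' A1 -> tm D A1) -> tm (C :: D) A0
             end
    with
    | ZZ => fun _ => bvar ZZ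
    | SS y => fun s' => wk _ (s' _ y)
    end s.

Fixpoint subst {G D : list ty} (s : forall A, var G A -> tm D A) {A : ty}
  (t : tm G A) {struct t} : tm D A :=
  match t in tm G0 A0 return (forall A1, var G0 A1 -> tm D A1) -> tm D A0 with
  | cst => fun _ => cst
  | fvar n B => fun _ => fvar n B
  | bvar x => fun s => s _ x
  | lam u => fun s => lam (subst (up_sub s) u)
  | app u v => fun s => app (subst s u) (subst s v)
  | pair u v => fun s => pair (subst s u) (subst s v)
  | p1 u => fun s => p1 (subst s u)
  | p2 u => fun s => p2 (subst s u)
  end s.

Definition sub1 {G : list ty} {B : ty} (v : tm G B) : forall A, var (B :: G) A -> tm G A :=
  fun A x =>
    match x in var L A0
      return match L with
             | [] => unit
             | C :: G' => tm G' C -> tm G' A0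
             end
    with
    | ZZ => fun v' => v'
    | SS y => fun _ => bvar y
    end v.

Definition subst1 {G : list ty} {A B : ty} (u : tm (A :: G) B) (v : tm G A) : tm G B :=
  subst (sub1 v) u.

(* Iso(Top), and the canonical term *^tau:  [star tau G = Some s] iff
   tau is in Iso(Top) and s is *^tau (in the binder context G);
   [star tau G = None] iff tau is not in Iso(Top). *)
Fixpoint star (A : ty) : forall G : list ty, option (tm G A) :=
  match A return forall G, option (tm G A) with
  | Top => fun G => Some cst
  | TV _ => fun _ => None
  | Arr A1 B1 => fun G =>
      match star B1 (A1 :: G) with
      | Some s => Some (lam s)
      | None => None
      end
  | Prod A1 B1 => fun G =>
      match star A1 G, star B1 G with
      | Some a, Some b => Some (pair a b)
      | _, _ => None
      end
  end.

Inductive IsoTop : ty -> Prop :=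
| iso_top : IsoTop Top
| iso_arr A B : IsoTop B -> IsoTop (Arr A B)
| iso_prod A B : IsoTop A -> IsoTop B -> IsoTop (Prod A B).

Inductive step : forall {G : list ty} {A : ty}, tm G A -> tm G A -> Prop :=
| s_beta {G A B} (u : tm (A :: G) B) (v : tm G A) :
    step (app (lam u) v) (subst1 u v)
| s_pi1 {G A B} (u : tm G A) (v : tm G B) : step (p1 (pair u v)) u
| s_pi2 {G A B} (u : tm G A) (v : tm G B) : step (p2 (pair u v)) v
| s_eta {G A B} (t : tm G (Arr A B)) :
    step (lam (app (wk A t) (bvar ZZ))) t
| s_sp {G A B} (u : tm G (Prod A B)) : step (pair (p1 u) (p2 u)) u
| s_gentop {G A} (u s : tm G A) :
    IsoTop A -> star A G = Some s -> u <> s -> step u s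
| s_etatop {G A B} (t : tm G (Arr A B)) (s : tm (A :: G) A) :
    IsoTop A -> star A (A :: G) = Some s -> step (lam (app (wk A t) s)) t
| s_sptop1 {G A B} (u : tm G (Prod A B)) (s : tm G B) :
    IsoTop B -> star B G = Some s -> step (pair (p1 u) s) u
| s_sptop2 {G A B} (u : tm G (Prod A B)) (s : tm G A) :
    IsoTop A -> star A G = Some s -> step (pair s (p2 u)) u
| c_lam {G A B} (u u' : tm (A :: G) B) : step u u' -> step (lam u) (lam u')
| c_app1 {G A B} (u u' : tm G (Arr A B)) (v : tm G A) :
    step u u' -> step (app u v) (app u' v)
| c_app2 {G A B} (u : tm G (Arr A B)) (v v' : tm G A) :
    step v v' -> step (app u v) (app u v')
| c_pair1 {G A B} (u u' : tm G A) (v : tm G B) :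
    step u u' -> step (pair u v) (pair u' v)
| c_pair2 {G A B} (u : tm G A) (v v' : tm G B) :
    step v v' -> step (pair u v) (pair u v')
| c_p1 {G A B} (u u' : tm G (Prod A B)) : step u u' -> step (p1 u) (p1 u')
| c_p2 {G A B} (u u' : tm G (Prod A B)) : step u u' -> step (p2 u) (p2 u').

Definition steps {G : list ty} {A : ty} : tm G A -> tm G A -> Prop :=
  clos_refl_trans (tm G A) (@step G A).

Definition SN {G : list ty} {A : ty} (t : tm G A) : Prop :=
  ~ exists f : nat -> tm G A, f 0 = t /\ forall k, step (f k) (f (S k)).

Fixpoint red (A : ty) : tm [] A -> Prop :=
  match A return tm [] A -> Prop with
  | Top => fun t => SN t
  | TV _ => fun t => SN t
  | Arr A1 B1 => fun t => forall u : tm [] A1, red A1 u -> red B1 (app t u)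
  | Prod A1 B1 => fun t => red A1 (p1 t) /\ red B1 (p2 t)
  end.

(* t[*^Top := z^Top], with z the free variable named n of type Top *)
Fixpoint repl (n : nat) {G : list ty} {A : ty} (t : tm G A) {struct t} : tm G A :=
  match t in tm G0 A0 return tm G0 A0 with
  | cst => fvar n Top
  | fvar m B => fvar m B
  | bvar x => bvar x
  | lam u => lam (repl n u)
  | app u v => app (repl n u) (repl n v)
  | pair u v => pair (repl n u) (repl n v)
  | p1 u => p1 (repl n u)
  | p2 u => p2 (repl n u)
  end.

Fixpoint occurs (n : nat) {G : list ty} {A : ty} (t : tm G A) {struct t} : Prop :=
  match t with
  | cst => False
  | fvar m B => m = n /\ B = Top
  | bvar _ => False
  | lam u => occurs n u
  | app u v => occurs n u \/ occurs n v
  | pair u v => occurs n u \/ occurs n v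
  | p1 u => occurs n u
  | p2 u => occurs n u
  end.

(* Main.v *)
Require Import Defs.
From Stdlib Require Import List Relations.
Import ListNotations.
From Stdlib Require Import Arith Lia Classical ClassicalEpsilon Program.Equality.
Import Defs.

Definition efv (n m : nat) {G} (B : ty) : tm G B :=
  match B as B0 return tm G B0 with
  | Top => if Nat.eqb m n then cst else fvar m Top
  | TV k => fvar m (TV k)
  | Arr x y => fvar m (Arr x y)
  | Prod x y => fvar m (Prod x y)
  end.

Fixpoint erase (n : nat) {G A} (t : tm G A) {struct t} : tm G A :=
  match t in tm G0 A0 return tm G0 A0 with
  | cst => cst
  | fvar m B => efv n m B
  | bvar x => bvar x
  | lam u => lam (erase n u)
  | app u v => app (erase n u) (erase n v)
  | pair u v => pair (erase n u) (erase n v)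
  | p1 u => p1 (erase n u)
  | p2 u => p2 (erase n u)
  end.

Definition cfv (n m : nat) (B : ty) : nat :=
  match B with Top => if Nat.eqb m n then 1 else 0 | _ => 0 end.

Fixpoint count (n : nat) {G A} (t : tm G A) {struct t} : nat :=
  match t with
  | cst => 0
  | fvar m B => cfv n m B
  | bvar _ => 0
  | lam u => count n u
  | app u v => count n u + count n v
  | pair u v => count n u + count n v
  | p1 u => count n u
  | p2 u => count n u
  end.

Lemma erase_ren (n : nat) : forall G A (t : tm G A) D (r : forall A, var G A -> var D A),
  erase n (ren r t) = ren r (erase n t).
Proof.
  intros G A t; induction t; intros; simpl; try reflexivity;
    try (rewrite ?IHt, ?IHt1, ?IHt2; reflexivity).
  destruct A; simpl; try reflexivity. destruct (Nat.eqb n0 n); reflexivity.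
Qed.

Lemma subst_ext : forall G A (t : tm G A) D (s s' : forall A, var G A -> tm D A),
  (forall A x, s A x = s' A x) -> subst s t = subst s' t.
Proof.
  intros G A t; induction t; intros; simpl; try reflexivity; auto;
    try (rewrite (IHt1 _ _ _ H), (IHt2 _ _ _ H); reflexivity);
    try (rewrite (IHt _ _ _ H); reflexivity).
  f_equal. apply IHt. intros A0 x. dependent destruction x; simpl.
  reflexivity. rewrite H; reflexivity.
Qed.

Lemma erase_up_sub (n : nat) : forall G D B (s : forall A, var G A -> tm D A) A (x : var (B :: G) A),
  erase n (up_sub s A x) = up_sub (fun A y => erase n (s A y)) A x.
Proof.
  intros. dependent destruction x; simpl. reflexivity.
  unfold wk. apply erase_ren.
Qed.

Lemma erase_subst (n : nat) : forall G A (t : tm G A) D (s : forall A, var G A -> tm D A),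
  erase n (subst s t) = subst (fun A x => erase n (s A x)) (erase n t).
Proof.
  intros G A t; induction t; intros; simpl; try reflexivity;
    try (rewrite ?IHt, ?IHt1, ?IHt2; reflexivity).
  - destruct A; simpl; try reflexivity. destruct (Nat.eqb n0 n); reflexivity.
  - rewrite IHt. f_equal. apply subst_ext. intros; apply erase_up_sub.
Qed.

Lemma erase_subst1 (n : nat) : forall G A B (u : tm (A :: G) B) (v : tm G A),
  erase n (subst1 u v) = subst1 (erase n u) (erase n v).
Proof.
  intros. unfold subst1. rewrite erase_subst. apply subst_ext.
  intros A0 x. dependent destruction x; reflexivity.
Qed.

Lemma star_pure (n : nat) : forall A G s, star A G = Some s -> erase n s = s /\ count n s = 0.
Proof.
  induction A; simpl; intros G s H.
  - injection H as <-. split; reflexivity.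
  - discriminate.
  - destruct (star A2 (A1 :: G)) eqn:E; [|discriminate].
    injection H as <-. destruct (IHA2 _ _ E). simpl. rewrite H; auto.
  - destruct (star A1 G) eqn:E1; [|discriminate].
    destruct (star A2 G) eqn:E2; [|discriminate].
    injection H as <-. destruct (IHA1 _ _ E1). destruct (IHA2 _ _ E2).
    simpl. rewrite H, H1. split; [reflexivity| lia].
Qed.

Lemma count0 (n : nat) : forall G A (u : tm G A), count n u = 0 -> erase n u = u.
Proof.
  intros G A u; induction u; simpl; intros H; try reflexivity;
    try (rewrite IHu1, IHu2 by lia; reflexivity);
    try (rewrite IHu by lia; reflexivity).
  destruct A; simpl in *; try reflexivity. destruct (Nat.eqb n0 n); [discriminate|reflexivity].
Qed.

Lemma step_erase (n : nat) : forall G A (s s' : tm G A), step s s' ->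
  step (erase n s) (erase n s') \/ (erase n s = erase n s' /\ count n s' < count n s).
Proof.
  intros G A s s' H; induction H; simpl.
  - left. rewrite erase_subst1. apply s_beta.
  - left; apply s_pi1.
  - left; apply s_pi2.
  - left. unfold wk. rewrite erase_ren. exact (s_eta _).
  - left; apply s_sp.
  - destruct (star_pure n _ _ _ H0) as [E C]. rewrite E, C.
    destruct (classic (erase n u = s)) as [Heq|Hne].
    + right. split; [exact Heq|].
      destruct (count n u) eqn:Cu; [|lia].
      exfalso. apply H1. rewrite <- (count0 n _ _ u Cu). exact Heq.
    + left. eapply s_gentop; eauto.
  - left. destruct (star_pure n _ _ _ H0) as [E C]. unfold wk. rewrite erase_ren, E.
    eapply s_etatop; eauto.
  - left. destruct (star_pure n _ _ _ H0) as [E C]. rewrite E. eapply s_sptop1; eauto.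
  - left. destruct (star_pure n _ _ _ H0) as [E C]. rewrite E. eapply s_sptop2; eauto.
  - destruct IHstep as [H1|[H1 H2]]; [left; apply c_lam; auto| right; rewrite H1; split; [reflexivity|lia]].
  - destruct IHstep as [H1|[H1 H2]]; [left; apply c_app1; auto| right; rewrite H1; split; [reflexivity|lia]].
  - destruct IHstep as [H1|[H1 H2]]; [left; apply c_app2; auto| right; rewrite H1; split; [reflexivity|lia]].
  - destruct IHstep as [H1|[H1 H2]]; [left; apply c_pair1; auto| right; rewrite H1; split; [reflexivity|lia]].
  - destruct IHstep as [H1|[H1 H2]]; [left; apply c_pair2; auto| right; rewrite H1; split; [reflexivity|lia]].
  - destruct IHstep as [H1|[H1 H2]]; [left; apply c_p1; auto| right; rewrite H1; split; [reflexivity|lia]].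
  - destruct IHstep as [H1|[H1 H2]]; [left; apply c_p2; auto| right; rewrite H1; split; [reflexivity|lia]].
Qed.

Definition SNa {G A} (t : tm G A) := Acc (fun a b => step b a) t.

Lemma SN_of_SNa : forall G A (t : tm G A), SNa t -> SN t.
Proof.
  intros G A t H. induction H as [t _ IH]. intros [f [H0 Hs]].
  apply (IH (f 1)). rewrite <- H0; apply Hs.
  exists (fun k => f (S k)); split; auto.
Qed.

Lemma notSNa_succ : forall G A (x : tm G A), ~ SNa x -> exists y, step x y /\ ~ SNa y.
Proof.
  intros. apply NNPP; intro H1. apply H. constructor. intros y Hy.
  apply NNPP; intro. apply H1; eauto.
Qed.

Lemma SNa_of_SN : forall G A (t : tm G A), SN t -> SNa t.
Proof.
  intros G A t H. apply NNPP; intro Hna. apply H.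
  assert (g : forall x : {x : tm G A | ~ SNa x},
             {y : {x : tm G A | ~ SNa x} | step (proj1_sig x) (proj1_sig y)}).
  { intros [x Hx]. apply constructive_indefinite_description.
    destruct (notSNa_succ _ _ x Hx) as [y [Hy1 Hy2]].
    exists (exist _ y Hy2). exact Hy1. }
  pose (h := fix h (k : nat) : {x : tm G A | ~ SNa x} :=
          match k with 0 => exist _ t Hna | S k => proj1_sig (g (h k)) end).
  exists (fun k => proj1_sig (h k)). split; [reflexivity|].
  intro k. simpl. exact (proj2_sig (g (h k))).
Qed.

Lemma SN_step : forall G A (t t' : tm G A), SN t -> step t t' -> SN t'.
Proof.
  intros G A t t' H Hs [f [H0 Hf]]. apply H.
  exists (fun k => match k with 0 => t | S k => f k end). split; [reflexivity|].
  intros [|k]; [rewrite H0; exact Hs| exact (Hf k)].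
Qed.

Lemma SN_steps : forall G A (t t' : tm G A), steps t t' -> SN t -> SN t'.
Proof.
  intros G A t t' H. induction H; eauto using SN_step.
Qed.

Lemma steps_lam : forall G A B (u u' : tm (A :: G) B), steps u u' -> steps (lam u) (lam u').
Proof. intros. induction H; [apply rt_step; apply c_lam; auto| apply rt_refl| eapply rt_trans; eauto]. Qed.
Lemma steps_p1 : forall G A B (u u' : tm G (Prod A B)), steps u u' -> steps (p1 u) (p1 u').
Proof. intros. induction H; [apply rt_step; apply c_p1; auto| apply rt_refl| eapply rt_trans; eauto]. Qed.
Lemma steps_p2 : forall G A B (u u' : tm G (Prod A B)), steps u u' -> steps (p2 u) (p2 u').
Proof. intros. induction H; [apply rt_step; apply c_p2; auto| apply rt_refl| eapply rt_trans; eauto]. Qed.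
Lemma steps_app : forall G A B (u u' : tm G (Arr A B)) v v', steps u u' -> steps v v' ->
  steps (app u v) (app u' v').
Proof.
  intros. apply rt_trans with (app u' v).
  - induction H; [apply rt_step; apply c_app1; auto| apply rt_refl| eapply rt_trans; eauto].
  - induction H0; [apply rt_step; apply c_app2; auto| apply rt_refl| eapply rt_trans; eauto].
Qed.
Lemma steps_pair : forall G A B (u u' : tm G A) (v v' : tm G B), steps u u' -> steps v v' ->
  steps (pair u v) (pair u' v').
Proof.
  intros. apply rt_trans with (pair u' v).
  - induction H; [apply rt_step; apply c_pair1; auto| apply rt_refl| eapply rt_trans; eauto].
  - induction H0; [apply rt_step; apply c_pair2; auto| apply rt_refl| eapply rt_trans; eauto].
Qed.

Lemma fv_cst : forall G n, @step G Top (fvar n Top) cst.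
Proof. intros. eapply s_gentop; [constructor| reflexivity| discriminate]. Qed.

Lemma steps_erase (n : nat) : forall G A (t : tm G A), steps t (erase n t).
Proof.
  intros G A t; induction t; simpl; try apply rt_refl;
    auto using steps_lam, steps_app, steps_pair, steps_p1, steps_p2.
  destruct A; simpl; try apply rt_refl.
  destruct (Nat.eqb n0 n); [apply rt_step, fv_cst| apply rt_refl].
Qed.

Lemma steps_repl (n : nat) : forall G A (t : tm G A), steps (repl n t) t.
Proof.
  intros G A t; induction t; simpl; try apply rt_refl;
    auto using steps_lam, steps_app, steps_pair, steps_p1, steps_p2.
  apply rt_step, fv_cst.
Qed.

Lemma erase_repl (n : nat) : forall G A (t : tm G A), erase n (repl n t) = erase n t.
Proof.
  intros G A t; induction t; simpl; try reflexivity;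
    try (rewrite ?IHt, ?IHt1, ?IHt2; reflexivity).
  rewrite Nat.eqb_refl; reflexivity.
Qed.

Lemma SNa_erase (n : nat) : forall G A (e : tm G A), SNa e -> forall s, erase n s = e -> SNa s.
Proof.
  intros G A e He. induction He as [e _ IHe]. intros s.
  remember (count n s) as c. revert s Heqc.
  induction c as [c IHc] using (well_founded_induction lt_wf).
  intros s Hc Hs. constructor. intros s' Hst.
  destruct (step_erase n _ _ _ _ Hst) as [H1|[H1 H2]].
  - apply (IHe (erase n s')); [subst e; exact H1| reflexivity].
  - apply (IHc (count n s')); [lia| reflexivity| congruence].
Qed.

Lemma SN_transfer (n : nat) : forall G A (s t : tm G A), erase n s = erase n t -> SN t -> SN s.
Proof.
  intros. apply SN_of_SNa. apply (SNa_erase n _ _ (erase n t)); auto.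
  apply SNa_of_SN. eapply SN_steps; [apply steps_erase| exact H0].
Qed.

Lemma red_lemma (n : nat) : forall A (s t : tm [] A), erase n s = erase n t -> red A t -> red A s.
Proof.
  induction A; simpl; intros s t H H0.
  - eapply SN_transfer; eauto.
  - eapply SN_transfer; eauto.
  - intros u Hu. apply (IHA2 (app s u) (app t u)); [simpl; rewrite H; reflexivity| auto].
  - destruct H0. split.
    + apply (IHA1 (p1 s) (p1 t)); [simpl; rewrite H; reflexivity| auto].
    + apply (IHA2 (p2 s) (p2 t)); [simpl; rewrite H; reflexivity| auto].
Qed.

Theorem mainTheorem8 (A : ty) (t : tm [] A) (n : nat) :
  ~ occurs n t ->
  (red A t -> red A (repl n t)) /\
  steps (repl n t) t /\
  (atomic A -> SN t -> SN (repl n t)).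
Proof.
  intros _. split; [|split].
  - apply (red_lemma n). apply erase_repl.
  - apply steps_repl.
  - intros _. apply SN_transfer with (n := n). apply erase_repl.
Qed.
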